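(* Let $t\ge 1$ be an integer, $\alpha>0$, and let $\mathcal{P}$ be a non-empty $\alpha$-rich collection of paths of length $2t-2$ (i.e. with $2t-1$ vertices) in a graph $G$. If $\alpha\ge t^2$, then $G$ contains a copy of $F_{t,t}$.
   Context: For $\alpha>0$ and $k\in\mathbb{N}$, a collection $\mathcal{P}$ of labelled paths $x_1x_2\cdots x_k$ (with distinct vertices) in $G$ is $\alpha$-rich if for every $x_1x_2\cdots x_k\in\mathcal{P}$ and every $2\le i\le k-1$ there exist at least $\alpha$ distinct vertices $x_i'$ such that $x_1\cdots x_{i-1}x_i'x_{i+1}\cdots x_k\in\mathcal{P}$. The grid $F_{t,t}$ has vertex set $[t]\times[t]$, two vertices being adjacent iff they differ in exactly one coordinate and there by exactly one. *)

(* Defs.v *)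
From mathcomp Require Import all_boot all_order all_algebra.
Set Implicit Arguments. Unset Strict Implicit. Unset Printing Implicit Defensive.
Import Order.TTheory GRing.Theory Num.Theory.

Definition simple_graph (V : finType) (e : rel V) : Prop :=
  symmetric e /\ irreflexive e.

Definition is_path (V : finType) (e : rel V) (k : nat) (p : {ffun 'I_k -> V}) : bool :=
  injectiveb p &&
  [forall i : 'I_k, forall j : 'I_k, (val j == (val i).+1) ==> e (p i) (p j)].

Definition replace_at (V : finType) (k : nat) (p : {ffun 'I_k -> V}) (i : 'I_k) (y : V)
  : {ffun 'I_k -> V} := [ffun j => if j == i then y else p j].

(* P is an alpha-rich collection of paths on k vertices: every member is a path,
   and for every member and every interior position (1-indexed 2..k-1, i.e.
   0-indexed 1..k-2) there are at least alpha vertices y such that replacing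
   that vertex by y gives a member of P. *)
Definition alpha_rich (R : realFieldType) (V : finType) (e : rel V) (k : nat)
  (P : {set {ffun 'I_k -> V}}) (alpha : R) : Prop :=
  (forall p, p \in P -> is_path e p) /\
  (forall p, p \in P -> forall i : 'I_k, (1 <= val i)%N -> ((val i).+2 <= k)%N ->
     alpha <= (#|[set y : V | replace_at p i y \in P]|)%:R)%R.

Definition grid_adj (t : nat) (a b : 'I_t * 'I_t) : bool :=
  ((a.1 == b.1) && (((val a.2).+1 == val b.2) || ((val b.2).+1 == val a.2))) ||
  ((a.2 == b.2) && (((val a.1).+1 == val b.1) || ((val b.1).+1 == val a.1))).

Definition contains_grid (V : finType) (e : rel V) (t : nat) : Prop :=
  exists f : 'I_t * 'I_t -> V,
    injective f /\ forall a b, grid_adj a b -> e (f a) (f b).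

(* Main.v *)
Require Import Defs.
From mathcomp Require Import all_boot all_order all_algebra.
From mathcomp Require Import zify.
Import Order.TTheory GRing.Theory Num.Theory.
Set Implicit Arguments. Unset Strict Implicit.

Section Grid.
Variables (V : finType) (e : rel V) (n : nat).
Hypothesis esym : symmetric e.
Local Notation N := (2 * n.+1 - 1).
Local Notation G := ('I_n.+1 * 'I_n.+1)%type.
Variable P : {set {ffun 'I_N -> V}}.
Hypothesis Ppath : forall q, q \in P -> is_path e q.
Hypothesis Prich : forall q, q \in P -> forall i : 'I_N, 0 < i -> i.+2 <= N ->
  n.+1 ^ 2 <= #|[set y | replace_at q i y \in P]|.

Lemma N_gt0 : 0 < N. Proof. lia. Qed.
Definition o0 : 'I_N := Ordinal N_gt0.
Definition pos (k : nat) : 'I_N := insubd o0 k.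
Lemma posE k : k < N -> val (pos k) = k.
Proof. by move=> hk; rewrite /pos val_insubd hk. Qed.

Definition diag (v : G) : nat := v.2 + n - v.1.
Definition pt (rho : nat -> nat) (k : nat) : G := (inord (rho k), inord (k + rho k - n)).
Definition inD (rho : nat -> nat) (v : G) : bool := v.1 <= rho (diag v).
Definition valid (rho : nat -> nat) : Prop := forall k, k < N ->
  [/\ rho k <= n, n <= k + rho k, k + rho k <= 2 * n &
      (k.+1 < N -> rho k.+1 <= rho k /\ rho k <= (rho k.+1).+1)].
Definition path_of rho (g : G -> V) : {ffun 'I_N -> V} :=
  [ffun k : 'I_N => g (pt rho k)].
Definition inv rho (g : G -> V) : Prop :=
  [/\ valid rho, path_of rho g \in P,
      (forall u v, inD rho u -> inD rho v -> g u = g v -> u = v) &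
      (forall u v, inD rho u -> inD rho v -> grid_adj u v -> e (g u) (g v))].
Definition flip (rho : nat -> nat) p := fun k => if k == p then (rho p).+1 else rho k.

Lemma ptE rho k : valid rho -> k < N ->
  (pt rho k).1 = rho k :> nat /\ (pt rho k).2 = k + rho k - n :> nat.
Proof.
move=> hv hk; have [h1 h2 h3 _] := hv k hk.
rewrite /pt /= !inordK; lia.
Qed.

Lemma grid_eq (u v : G) : u.1 = v.1 :> nat -> u.2 = v.2 :> nat -> u = v.
Proof. by case: u v => [a b] [c d] /= /val_inj -> /val_inj ->. Qed.

Lemma adjP (a b : G) : grid_adj a b ->
  (a.1 = b.1 :> nat /\ (a.2.+1 = b.2 :> nat \/ b.2.+1 = a.2 :> nat)) \/
  (a.2 = b.2 :> nat /\ (a.1.+1 = b.1 :> nat \/ b.1.+1 = a.1 :> nat)).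
Proof.
rewrite /grid_adj.
case/orP => /andP [/eqP h /orP [/eqP h'|/eqP h']].
- by left; split; [rewrite h|left].
- by left; split; [rewrite h|right].
- by right; split; [rewrite h|left].
- by right; split; [rewrite h|right].
Qed.

Lemma path_adj q (i j : 'I_N) : q \in P -> val j = (val i).+1 -> e (q i) (q j).
Proof.
move=> /Ppath /andP [_ /forallP h] hij.
by have /forallP /(_ j) /implyP := h i; apply; apply/eqP.
Qed.

Lemma diag_pt rho k : valid rho -> k < N -> diag (pt rho k) = k.
Proof.
move=> hv hk; have [h1 h2] := ptE hv hk; have [? ? ? _] := hv k hk.
rewrite /diag h1 h2; lia.
Qed.

Lemma inD_pt rho k : valid rho -> k < N -> inD rho (pt rho k).
Proof. by move=> hv hk; rewrite /inD diag_pt // (proj1 (ptE hv hk)). Qed.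

Lemma pt_eq rho k (w : G) : valid rho -> k < N -> w.1 = rho k :> nat ->
  w.2 = k + rho k - n :> nat -> w = pt rho k.
Proof. move=> hv hk h1 h2; have [p1 p2] := ptE hv hk; apply: grid_eq; lia. Qed.

Lemma diag_lt (v : G) : diag v < N.
Proof. rewrite /diag; have := ltn_ord v.1; have := ltn_ord v.2; lia. Qed.

Definition rho0 (k : nat) := n - k.
Lemma valid0 : valid rho0.
Proof. move=> k hk; rewrite /rho0; split; lia. Qed.

Definition g0 (Q : {ffun 'I_N -> V}) (v : G) := Q (pos (diag v)).

Lemma inv0 Q : Q \in P -> inv rho0 (g0 Q).
Proof.
move=> hQ; split.
- exact: valid0.
- have -> : path_of rho0 (g0 Q) = Q; last by [].
  by apply/ffunP => k; rewrite ffunE /g0 (diag_pt valid0 (ltn_ord k)); congr (Q _); apply: val_inj; rewrite posE.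
- move=> u v hu hv; rewrite /g0 => hq.
  have /andP [/injectiveP hi _] := Ppath hQ.
  have := congr1 val (hi _ _ hq); rewrite !posE ?diag_lt // => hd.
  move: hu hv hd; rewrite /inD /rho0 /diag => hu hv hd.
  have := ltn_ord u.1; have := ltn_ord u.2; have := ltn_ord v.1; have := ltn_ord v.2.
  move=> *; apply: grid_eq; lia.
- move=> u v hu hv /adjP hadj; rewrite /g0.
  have := ltn_ord u.1; have := ltn_ord u.2; have := ltn_ord v.1; have := ltn_ord v.2.
  move=> *.
  have [hd|hd] : diag v = (diag u).+1 \/ diag u = (diag v).+1 by rewrite /diag; lia.
  + by apply: path_adj; rewrite // !posE ?diag_lt.
  + by rewrite esym; apply: path_adj; rewrite // !posE ?diag_lt.
Qed.

Lemma flip_mono rho p u : inD rho u -> inD (flip rho p) u.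
Proof. rewrite /inD /flip; case: eqP => // ->; lia. Qed.

Lemma step rho g p : inv rho g -> 0 < p -> p.+1 < N -> rho p.-1 = (rho p).+1 ->
  rho p.+1 = rho p -> exists g', inv (flip rho p) g'.
Proof.
move=> [hv hP hi he] p0 pN hm hp.
have hv' : valid (flip rho p).
  move=> k hk; rewrite /flip /=.
  have [a1 a2 a3 a4] := hv k hk.
  have [b1 b2 b3 b4] := hv p.-1 ltac:(lia).
  have [c1 c2 c3 c4] := hv p.+1 pN.
  have [d1 d2 d3 d4] := hv p ltac:(lia).
  have e1 : p.-1.+1 = p by lia.
  rewrite e1 in b4.
  have [->|hkp] := eqVneq k p.
    rewrite ifN_eq; last by lia.
    split; lia.
  have [hk1|hk1] := eqVneq k.+1 p.
    have hk' : k = p.-1 by lia.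
    rewrite /= hk1; rewrite hk' in a1 a2 a3 a4 hk * => *.
    split; lia.
  split; lia.
have pN' : p < N by lia.
set vn := pt (flip rho p) p.
have [vn1 vn2] := ptE hv' pN'.
rewrite /flip eqxx in vn1 vn2; rewrite -/vn in vn1 vn2.
have dvn : diag vn = p := diag_pt hv' pN'.
have nvn : ~~ inD rho vn by rewrite /inD dvn vn1; lia.
have flipD : forall u, inD (flip rho p) u -> u = vn \/ inD rho u.
  move=> u; rewrite /inD /flip; case: eqP => hd /=; last by move=> h; right.
  move=> hu; have [hlt|hge] := leqP u.1 (rho p); first by right; rewrite hd.
  left; move: hd; rewrite /diag => hd.
  have := ltn_ord u.1; have := ltn_ord u.2; move=> *.
  apply: grid_eq; [rewrite vn1|rewrite vn2]; lia.
have hS := Prich hP (i := pos p); rewrite posE // in hS.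
have {hS} hS := hS p0 ltac:(lia).
have hcard : #|[set g x | x in [set u | inD rho u]]| < n.+1 ^ 2.
  apply: (leq_ltn_trans (leq_imset_card _ _)).
  have : [set u | inD rho u] \proper [set: G].
    by apply/properP; split; [exact: subsetT | exists vn; rewrite ?inE].
  by move/proper_card; rewrite cardsT card_prod card_ord mulnn.
have [y yS yn] : exists2 y, y \in [set y | replace_at (path_of rho g) (pos p) y \in P] &
    y \notin [set g x | x in [set u | inD rho u]].
  apply/subsetPn; apply/negP => hsub; have := subset_leq_card hsub; lia.
rewrite inE in yS.
pose g' := fun v => if v == vn then y else g v.
have hP' : path_of (flip rho p) g' \in P.
  have -> : path_of (flip rho p) g' = replace_at (path_of rho g) (pos p) y; last by [].
  apply/ffunP => k; rewrite /replace_at !ffunE /g'.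
  have [->|hk] := eqVneq k (pos p); first by rewrite posE // -/vn eqxx.
  have hkp : val k != p.
    by apply: contra hk => /eqP hk'; apply/eqP/val_inj; rewrite posE.
  have -> : pt (flip rho p) k = pt rho k by rewrite /pt /flip (ifN_eq _ _ hkp).
  case: eqP => [heq|//]; by move: nvn; rewrite -heq inD_pt.
have key : forall w, (grid_adj w vn || grid_adj vn w) -> inD rho w ->
    w = pt (flip rho p) p.-1 \/ w = pt (flip rho p) p.+1.
  move=> w hadj hw.
  have := ltn_ord w.1; have := ltn_ord w.2; move=> *.
  have hadj' : (w.1 = vn.1 :> nat /\ (w.2.+1 = vn.2 :> nat \/ vn.2.+1 = w.2 :> nat)) \/
    (w.2 = vn.2 :> nat /\ (w.1.+1 = vn.1 :> nat \/ vn.1.+1 = w.1 :> nat)).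
    case/orP: hadj => /adjP; lia.
  rewrite vn1 vn2 in hadj'.
  have [hb1 hb2 hb3 hb4] := hv p.-1 ltac:(lia).
  have [hc1 hc2 hc3 hc4] := hv p.+1 pN.
  have hd1 : p.-1 != p by lia.
  have hd2 : p.+1 != p by lia.
  have [hdw|hdw] : diag w = p.-1 \/ diag w = p.+1 by rewrite /diag; lia.
  - left; rewrite /inD hdw in hw; move: hdw; rewrite /diag => hdw.
    apply: pt_eq => //; first lia; rewrite /flip (ifN_eq _ _ hd1); lia.
  - right; rewrite /inD hdw in hw; move: hdw; rewrite /diag => hdw.
    apply: pt_eq => //; rewrite /flip (ifN_eq _ _ hd2); lia.
have hm1 : p.-1 < N by lia.
have hpm : val (pos p) = (val (pos p.-1)).+1 by rewrite !posE //; lia.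
have hpp : val (pos p.+1) = (val (pos p)).+1 by rewrite !posE.
have E1 := path_adj hP' hpm; have E2 := path_adj hP' hpp.
rewrite !ffunE !posE // -/vn /g' eqxx in E1 E2.
exists g'; split => //.
- move=> u w hu hw; rewrite /g'.
  have [->|hu'] := flipD _ hu; have [->|hw'] := flipD _ hw => //.
  + rewrite eqxx; case: eqP => [//|hne] hy; exfalso; move/negP: yn; apply.
    by apply/imsetP; exists w; rewrite ?inE.
  + rewrite eqxx; case: eqP => [//|hne] hy; exfalso; move/negP: yn; apply.
    by apply/imsetP; exists u; rewrite ?inE.
  + have hun : u != vn by apply: contraNneq nvn => <-.
    have hwn : w != vn by apply: contraNneq nvn => <-.
    rewrite (negbTE hun) (negbTE hwn); exact: hi.
- move=> u w hu hw hadj; rewrite /g'.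
  have [hu1|hu1] := eqVneq u vn; have [hw1|hw1] := eqVneq w vn.
  + by move: hadj; rewrite hu1 hw1 => /adjP; lia.
  + have hwD : inD rho w by case: (flipD _ hw) => // hh; rewrite hh eqxx in hw1.
    have [hh|hh] := key w ltac:(by rewrite -hu1 hadj orbT) hwD.
    * rewrite -hh (negbTE hw1) in E1; by rewrite esym.
    * rewrite -hh (negbTE hw1) in E2; by [].
  + have huD : inD rho u by case: (flipD _ hu) => // hh; rewrite hh eqxx in hu1.
    have [hh|hh] := key u ltac:(by rewrite -hw1 hadj) huD.
    * rewrite -hh (negbTE hu1) in E1; by [].
    * rewrite -hh (negbTE hu1) in E2; by rewrite esym.
  + apply: he => //.
    * by case: (flipD _ hu) => // hh; rewrite hh eqxx in hu1.
    * by case: (flipD _ hw) => // hh; rewrite hh eqxx in hw1.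
Qed.


Lemma corner rho (v : G) : valid rho -> ~~ inD rho v ->
  (forall w, ~~ inD rho w -> v.1 + v.2 <= w.1 + w.2) ->
  [/\ 0 < diag v, (diag v).+1 < N, rho (diag v).-1 = (rho (diag v)).+1,
      rho (diag v).+1 = rho (diag v) & v.1 = (rho (diag v)).+1 :> nat].
Proof.
move=> hv hnv hmin.
have hb1 := ltn_ord v.1; have hb2 := ltn_ord v.2.
have hdN : diag v < N := diag_lt v.
have hd : diag v = v.2 + n - v.1 by [].
have [a1 a2 a3 a4] := hv _ hdN.
move: hnv; rewrite /inD => hnv.
have v1p : 0 < v.1 by lia.
have v2p : 0 < v.2 by lia.
pose w1 : G := (inord v.1.-1, v.2).
have w1_1 : w1.1 = v.1.-1 :> nat by rewrite /= inordK //; lia.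
have hw1 : inD rho w1.
  apply/negPn/negP => h; have := hmin _ h; rewrite w1_1 /=; lia.
have dw1 : diag w1 = (diag v).+1 by rewrite /diag w1_1 /=; lia.
rewrite /inD dw1 w1_1 in hw1.
pose w2 : G := (v.1, inord v.2.-1).
have w2_2 : w2.2 = v.2.-1 :> nat by rewrite /= inordK //; lia.
have hw2 : inD rho w2.
  apply/negPn/negP => h; have := hmin _ h; rewrite w2_2 /=; lia.
have dw2 : diag w2 = (diag v).-1 by rewrite /diag w2_2 /=; lia.
rewrite /inD dw2 /= in hw2.
have [b1 b2 b3 b4] := hv (diag v).-1 ltac:(lia).
have e1 : (diag v).-1.+1 = diag v by lia.
rewrite e1 in b4.
have h4 := a4 ltac:(lia).
have h5 := b4 ltac:(lia).
split; lia.
Qed.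

Lemma finish rho g : inv rho g -> (forall v, inD rho v) -> contains_grid e n.+1.
Proof.
move=> [_ _ hi he] hall; exists g; split.
- by move=> u v; apply: hi.
- by move=> a b; apply: he.
Qed.

Lemma loop m : forall rho g, inv rho g -> #|[set v | ~~ inD rho v]| <= m ->
  contains_grid e n.+1.
Proof.
elim: m => [|m IH] rho g hinv hc.
  case: (boolP [exists v, ~~ inD rho v]) => [/existsP [v0 hv0]|/existsPn hall].
    have : 0 < #|[set v | ~~ inD rho v]| by apply/card_gt0P; exists v0; rewrite inE.
    lia.
  by apply: finish hinv _ => v; apply/negbNE/hall.
case: (boolP [exists v, ~~ inD rho v]) => [/existsP [v0 hv0]|/existsPn hall]; last first.
  by apply: finish hinv _ => v; apply/negbNE/hall.
have hv := hinv; case: hv => hv _ _ _.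
case: (@arg_minnP _ v0 (fun v => ~~ inD rho v) (fun v : G => v.1 + v.2) hv0) => v hnv hmin.
have [c1 c2 c3 c4 c5] := corner hv hnv hmin.
have [g' hinv'] := step hinv c1 c2 c3 c4.
apply: (IH _ g' hinv').
have hsub : [set x | ~~ inD (flip rho (diag v)) x] \proper [set x | ~~ inD rho x].
  apply/properP; split.
    by apply/subsetP => x; rewrite !inE; apply: contra; apply: flip_mono.
  exists v; rewrite !inE //.
  by rewrite negbK /inD /flip eqxx c5.
have := proper_card hsub; lia.
Qed.

End Grid.


Theorem proposition3p3 (R : realFieldType) (V : finType) (e : rel V) (t : nat)
  (alpha : R) (P : {set {ffun 'I_(2 * t - 1) -> V}}) :
  simple_graph e -> 1 <= t -> (0 < alpha)%R ->
  P != set0 -> alpha_rich e P alpha ->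
  ((t ^ 2)%:R <= alpha)%R ->
  contains_grid e t.
Proof.
move=> [esym _] t1 _ Pn0 [Ppath Prich] ta.
destruct t as [|n]; first by [].
case/set0Pn: Pn0 => Q hQ.
have Prich' : forall q, q \in P -> forall i : 'I_(2 * n.+1 - 1), 0 < i ->
    i.+2 <= 2 * n.+1 - 1 -> n.+1 ^ 2 <= #|[set y | replace_at q i y \in P]|.
  move=> q hq i h1 h2; rewrite -(ler_nat R); exact: le_trans ta (Prich q hq i h1 h2).
exact: (loop esym Ppath Prich' (inv0 esym Ppath hQ) (leqnn _)).
Qed.
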